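(* For every finite binary word $a_1a_2\cdots a_n$ (with $a_i\in\{0,1\}$) one has $$\omega(a_1a_2\cdots a_n)\equiv\sum_{i=1}^n(-1)^ia_i \pmod 3.$$
   Context: The weight $\omega$ is defined on finite binary words (paths in the infinite rooted planar binary tree, $0$ = left edge, $1$ = right edge) as the color of the region immediately to the left of the vertex $z$. The coloring is the proper $3$-coloring by $\mathbb{Z}_3=\{0,1,2\}$ of the complement of the tree (drawn in the upper half plane with a root edge) in which the regions to the left of, to the right of and below the root are colored $0,1,2$. Equivalently, attach to each word $z$ a triple $(L(z),R(z),B(z))$ with - $(L,R,B)(\emptyset)=(0,1,2)$, - $(L,R,B)(z0)=(L(z),B(z),R(z))$, - $(L,R,B)(z1)=(B(z),R(z),L(z))$, and set $\omega(z)=L(z)$. *)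

(* Defs.v *)
From mathcomp Require Import all_boot all_algebra.
Set Implicit Arguments. Unset Strict Implicit. Unset Printing Implicit Defensive.
Import GRing.Theory.
Local Open Scope ring_scope.

Definition color := 'Z_3.

(* Finite binary words z = a_1 a_2 ... a_n, represented as the sequence
   [:: a_1; ...; a_n] of booleans (false = 0 = left edge, true = 1 = right edge). *)
Definition word := seq bool.

Definition step (t : color * color * color) (a : bool) : color * color * color :=
  let: (L, R, B) := t in
  if a then (B, R, L) else (L, B, R).

Definition LRB (z : word) : color * color * color :=
  foldl step (0, 1, 2%:R) z.

Definition omega (z : word) : color := (LRB z).1.1.

(* Main.v *)
Require Import Defs.
From mathcomp Require Import all_boot all_algebra.
Import GRing.Theory.
Local Open Scope ring_scope.

Definition S (a : seq bool) : 'Z_3 :=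
  \sum_(i < size a) (-1) ^+ i.+1 * (nth false a i)%:R.

Lemma three0 (d : 'Z_3) : d + d = - d.
Proof. apply/eqP; rewrite -subr_eq0 opprK. by case: d => [[|[|[|]]] ?]. Qed.

Lemma LRB_inv (a : seq bool) :
  LRB a = (S a, S a + (-1) ^+ size a, S a - (-1) ^+ size a).
Proof.
elim/last_ind: a => [|a x IH].
  rewrite /LRB /S /= big_ord0 expr0 add0r sub0r; congr (_, _, _); by apply/val_inj.
rewrite /LRB foldl_rcons -/(LRB a) IH /S size_rcons big_ord_recr /=.
rewrite nth_rcons ltnn eqxx.
have E : \sum_(i < size a) (-1) ^+ i.+1 * (nth false (rcons a x) (@widen_ord (size a) (size a).+1 (leqnSn _) i))%:R
   = \sum_(i < size a) (-1) ^+ i.+1 * (nth false a i)%:R :> 'Z_3.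
  by apply: eq_bigr => i _; rewrite /= nth_rcons ltn_ord.
rewrite E -/(S a); clear E.
set s := S a; set d := (-1) ^+ size a : 'Z_3.
rewrite exprS -/d.
case: x => /=.
  rewrite mulr1 !mulN1r opprK.
  congr (_, _, _).
  - by rewrite -addrA -opprD three0 opprK.
  - by rewrite addrNK.
by rewrite !mulr0 mulN1r !addr0 opprK.
Qed.

Theorem proposition2p5 (a : seq bool) :
  omega a = \sum_(i < size a) (-1) ^+ i.+1 * (nth false a i)%:R :> 'Z_3.
Proof. by rewrite /omega LRB_inv. Qed.
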